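(* There exists a constant $c>0$ such that for all integers $1\le m\le n$ and all integers $z\in[0,l(m,n)]$, \[\mathbb{P}_z\big(L(m,n)\cap U(m,n,z)\big)\ge c\,\frac{z}{\sqrt{n-m+1}}.\]
   Context: $X_1,X_2,\ldots$ are i.i.d. uniform on $\{-1,1\}$; under $\mathbb{P}_z$ the walk is $Z_i=z+\sum_{k=1}^i\prod_{j=1}^kX_j$ (a simple symmetric random walk started at $z$). Define $L(m,n)=\{Z_i>0\ \forall\, 1\le i\le n-m+1\}$, $U(m,n,z)=\{\max_{1\le i\le n-m+1}Z_i\ge 2z\}$, and $l(m,n)=\lfloor\sqrt{n-m+1}/2\rfloor\wedge\lfloor\sqrt{m-1}/2\rfloor$. *)

(* Defs.v *)
From HB Require Import structures.
From mathcomp Require Import all_boot all_order all_algebra.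
From mathcomp Require Import Rstruct.
Set Implicit Arguments. Unset Strict Implicit. Unset Printing Implicit Defensive.
Import Order.TTheory GRing.Theory Num.Theory.
Local Open Scope ring_scope.

Definition Xv (N : nat) (x : N.-tuple bool) (j : nat) : int :=
  if nth false x j.-1 then 1 else -1.

Definition Zw (N : nat) (z : int) (x : N.-tuple bool) (i : nat) : int :=
  z + \sum_(1 <= k < i.+1) \prod_(1 <= j < k.+1) Xv x j.

Definition Lev (N : nat) (z : int) (x : N.-tuple bool) : bool :=
  [forall i : 'I_N, 0 < Zw z x i.+1].

Definition Uev (N : nat) (z : int) (x : N.-tuple bool) : bool :=
  [exists i : 'I_N, 2 * z <= Zw z x i.+1].

(* P_z(L(m,n) ∩ U(m,n,z)): the events only depend on X_1..X_{n-m+1},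
   which are i.i.d. uniform on {-1,1}, so the probability is the uniform
   proportion over {-1,1}^(n-m+1). *)
Definition probLU (m n : nat) (z : int) : Rdefinitions.R :=
  (#|[set x : (n - m + 1).-tuple bool | Lev z x && Uev z x]|)%:R
  / (2 ^+ (n - m + 1)).

Definition lmn (m n : nat) : int :=
  Order.min (Num.floor (Num.sqrt ((n - m + 1)%:R : Rdefinitions.R) / 2))
            (Num.floor (Num.sqrt ((m - 1)%:R : Rdefinitions.R) / 2)).

(* Main.v *)
Require Import Defs.
From HB Require Import structures.
From mathcomp Require Import all_boot all_order all_algebra.
From mathcomp Require Import Rstruct zify ring lra.
Import Order.TTheory GRing.Theory Num.Theory.

Lemma central_step n : n.+1 * 'C(n.+1.*2, n.+1) = 2 * (n.*2.+1) * 'C(n.*2, n).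
Proof.
have h1 := mul_bin_diag (n.+1.*2) n.
have h2 := mul_bin_diag (n.*2.+1) n.
have h3 : 'C(n.*2.+1, n) = 'C(n.*2.+1, n.+1).
  rewrite -(bin_sub (n := n.*2.+1) (m := n.+1)); last by lia.
  congr 'C(_,_); lia.
rewrite doubleS /= in h1 *. rewrite h3 in h1. simpl in h2.
move: h1 h2; set a := 'C(_, n.+1); set b := 'C(_, n.+1); set c := 'C(_, n) => h1 h2.
have : n.+1 * (n.+1 * b) = n.+1 * (2 * n.*2.+1 * c).
  rewrite -h1. have -> : n.*2.+2 = 2 * n.+1 by lia.
  rewrite -mulnA -h2. ring.
by move/eqP; rewrite eqn_mul2l /= => /eqP.
Qed.

Lemma central_even n : 0 < n -> 16 ^ n <= 4 * n * 'C(n.*2, n) ^ 2.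
Proof.
elim: n => [//|n IH] _.
have E := central_step n.
case: n IH E => [|n] IH E.
  by [].
have {}IH := IH isT.
move: IH E; set C := 'C(_, n.+1); set C' := 'C(_, n.+2) => IH E.
rewrite expnS.
have H : (n.+2 ^ 2 * n.+1) * (16 * 16 ^ n.+1) <= (n.+2 ^ 2 * n.+1) * (4 * n.+2 * C' ^ 2).
  have -> : n.+2 ^ 2 * n.+1 * (4 * n.+2 * C' ^ 2) = 4 * n.+2 * (n.+1 * (n.+2 * C') ^ 2) by ring.
  rewrite E.
  have -> : 4 * n.+2 * (n.+1 * (2 * (n.+1).*2.+1 * C) ^ 2) = 4 * n.+2 * (n.+1).*2.+1 ^ 2 * (4 * n.+1 * C ^ 2) by ring.
  apply: leq_trans (leq_mul (leqnn _) IH).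
  have h : 4 * (n.+2 ^ 2 * n.+1) <= n.+2 * (n.+1).*2.+1 ^ 2 by nia.
  have := leq_mul h (leqnn (16 ^ n.+1)). nia.
by rewrite leq_pmul2l in H.
Qed.

Lemma central N : 0 < N -> 4 ^ N <= 4 * N * 'C(N, uphalf N) ^ 2.
Proof.
rewrite uphalf_half.
have [n ->] : exists n, N = n.*2 + odd N.
  by exists N./2; rewrite -{1}(odd_double_half N) addnC.
rewrite oddD odd_double /=; case: (odd N) => /= N0.
  have -> : (n.*2 + 1)./2 = n by lia.
  have h2 := mul_bin_diag (n.*2.+1) n. simpl in h2.
  case: n h2 N0 => [|n] h2 N0; first by [].
  have IH := @central_even n.+1 isT.
  move: h2 IH; set a := 'C(_, n.+2); set c := 'C(_, n.+1) => h2 IH.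
  rewrite add1n.
  have H : n.+2 ^ 2 * 4 ^ (n.+1).*2.+1 <= n.+2 ^ 2 * (4 * (n.+1).*2.+1 * a ^ 2).
    have -> : n.+2 ^ 2 * (4 * (n.+1).*2.+1 * a ^ 2) = 4 * (n.+1).*2.+1 * (n.+2 * a) ^ 2 by ring.
    have e16 : 4 ^ (n.+1).*2 = 16 ^ n.+1 by rewrite -mul2n expnM.
    rewrite -h2 (expnS 4) e16.
    set P := 16 ^ n.+1 in IH *; set Q := c ^ 2 in IH *.
    have -> : 4 * n.+1.*2.+1 * (n.+1.*2.+1 * c) ^ 2 = 4 * n.+1.*2.+1 ^ 3 * Q by rewrite /Q; ring.
    have h1 : n.+2 ^ 2 * (4 * P) <= n.+2 ^ 2 * (4 * (4 * n.+1 * Q)).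
      by apply: leq_mul => //; apply: leq_mul.
    apply: leq_trans h1 _.
    have h3 : n.+2 ^ 2 * 4 * n.+1 <= n.+1.*2.+1 ^ 3 by nia.
    have := leq_mul h3 (leqnn (4 * Q)). nia.
  by rewrite addn1; rewrite leq_pmul2l in H.
have -> : (n.*2 + 0)./2 = n by lia.
rewrite addn0 in N0 *.
have := @central_even n (ltac:(lia)).
rewrite -mul2n expnM add0n; set C := 'C(_, _); move=> h; have -> : 4 ^ 2 = 16 by []. apply: leq_trans h _; nia.
Qed.

Lemma poly_ratio k N d : k <= N -> N + d = 2 * k ->
  k.+1 * (2 * N + 4) + (N - k) * d ^ 2 <= (N - k) * (2 * N + 4) + k.+1 * (d + 2) ^ 2.
Proof. move=> h1 h2. nia. Qed.

Lemma ratio N j : uphalf N + j <= N ->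
  'C(N, uphalf N) * (2 * N + 4) <=
  (2 * N + 4) * 'C(N, uphalf N + j) + 'C(N, uphalf N) * (2 * (uphalf N + j) - N) ^ 2.
Proof.
have hh : N <= 2 * uphalf N <= N + 1 by rewrite uphalf_half; case: (odd N) (odd_double_half N) => /=; lia.
elim: j => [|j IH] hj; first by rewrite addn0 mulnC leq_addr.
rewrite addnS in hj *.
have {IH} IH := IH (ltnW hj).
move: IH; set k := uphalf N + j; set C := 'C(N, uphalf N); set c := 'C(N, k) => IH.
have E := mul_bin_left N k. rewrite -/c in E.
set c' := 'C(N, k.+1) in E *.
have hk : N <= 2 * k by lia.
case: (leqP (2 * N + 4) ((2 * k.+1 - N) ^ 2)) => hd.
  by apply: leq_trans (leq_addl _ _); rewrite leq_mul2l hd orbT.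
rewrite -(leq_pmul2l (ltn0Sn k)).
have E2 : k.+1 * ((2 * N + 4) * c' + C * (2 * k.+1 - N) ^ 2)
   = (2 * N + 4) * ((N - k) * c) + k.+1 * C * (2 * k.+1 - N) ^ 2.
  rewrite -E; ring.
rewrite E2.
have IH2 := leq_mul (leqnn (N - k)) IH.
have P := @poly_ratio k N (2 * k - N) (ltnW hj) (ltac:(lia)).
have P2 := leq_mul (leqnn C) P.
have -> : 2 * k.+1 - N = 2 * k - N + 2 by lia.
move: IH2 P2; set D := 2 * k - N; set K := 2 * N + 4.
move: (N - k) => M IH2 P2.
lia.
Qed.
Local Open Scope ring_scope.
Section Steps.
Variable N : nat.
Implicit Types (b : {set 'I_N}).

Definition bn b (k : nat) : bool := k \in [seq val i | i <- enum b].
Definition sg (c : bool) : int := if c then 1 else -1.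
Definition W b (i : nat) : int := \sum_(0 <= k < i) sg (bn b k).

Lemma bnE b (i : 'I_N) : bn b i = (i \in b).
Proof. by rewrite /bn mem_map ?mem_enum //; exact: val_inj. Qed.

Lemma W_card b : W b N = (#|b|%:Z * 2 - N%:Z).
Proof.
rewrite /W big_mkord (eq_bigr (fun i : 'I_N => sg (i \in b))); last by move=> i _; rewrite bnE.
rewrite (bigID (fun i => i \in b)) /=.
rewrite (eq_bigr (fun _ => 1)); last by move=> i ->.
rewrite [X in _ + X](eq_bigr (fun _ => -1)); last by move=> i /negbTE ->.
rewrite !sumr_const.
have hc : (#|b| + #|(fun i => i \notin b)| = N)%N.
  by rewrite -[in RHS](card_ord N) -(cardC b).
move: hc; set c := #|(fun i : 'I_N => i \notin b)|; move=> hc.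
have hz : N%:Z = #|b|%:Z + c%:Z by rewrite -PoszD hc.
rewrite mulNrn !natz hz; ring.
Qed.

Definition psif b (k : nat) : bool := if k == 0%N then bn b 0 else bn b k == bn b k.-1.
Definition psi b : N.-tuple bool := @Tuple N bool (mkseq (psif b) N) (introT eqP (size_mkseq _ _)).

Lemma prodX b k : (k < N)%N -> \prod_(1 <= j < k.+2) Xv (psi b) j = sg (bn b k).
Proof.
elim: k => [|k IH] hk.
  by rewrite big_nat1 /Xv /= nth_mkseq //.
rewrite big_nat_recr //= IH ?(ltnW hk) // /Xv /= nth_mkseq // /psif /=.
by case: (bn b k); case: (bn b k.+1).
Qed.

Lemma Zw_psi z b i : (i <= N)%N -> Zw z (psi b) i = z + W b i.
Proof.
move=> hi; rewrite /Zw /W big_add1 /=; congr (_ + _).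
apply: eq_big_nat => k /andP[_ hk]; apply: prodX; lia.
Qed.

Lemma psi_inj : injective psi.
Proof.
move=> b1 b2 e; apply/setP => i.
have := @prodX b1 i (ltn_ord i); rewrite e prodX // !bnE.
by case: (i \in b1); case: (i \in b2).
Qed.

End Steps.
Arguments bn {N}. Arguments W {N}. Arguments psi {N}. Arguments psif {N}.
Arguments bnE {N}. Arguments W_card {N}. Arguments prodX {N}. Arguments Zw_psi {N}. Arguments psi_inj {N}.
Lemma find_eq (T : Type) (a : pred T) (s : seq T) x0 j :
  (j < size s)%N -> a (nth x0 s j) -> (forall i, (i < j)%N -> ~~ a (nth x0 s i)) -> find a s = j.
Proof.
move=> hj ha hb.
case: (ltngtP (find a s) j) => // h.
- have hs : has a s by rewrite has_find; apply: ltn_trans h hj.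
  by have := hb _ h; rewrite (nth_find x0 hs).
- by rewrite before_find in ha.
Qed.

Section Refl.
Variable N : nat.
Variable z : int.
Hypothesis z0 : 0 <= z.
Implicit Types (b c : {set 'I_N}).

Definition hitp b := fun i => (z + W b i <= 0).
Definition tau b := find (hitp b) (iota 0 N.+1).
Definition Tb b := has (hitp b) (iota 0 N.+1).
Definition refl b := [set i : 'I_N | if (val i < tau b)%N then i \notin b else i \in b].
Definition sigp c := fun i => (z <= W c i).

Lemma tau_le {b} : Tb b -> (tau b <= N)%N.
Proof. by rewrite /Tb has_find size_iota. Qed.

Lemma tau_hit {b} : Tb b -> z + W b (tau b) <= 0.
Proof.
move=> h; have := nth_find 0%N h; rewrite nth_iota; first by rewrite add0n.
by move: h; rewrite /Tb has_find size_iota.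
Qed.

Lemma tau_before {b i} : (i < tau b)%N -> 0 < z + W b i.
Proof.
move=> h; have hs : (i < N.+1)%N.
  by apply: leq_trans h _; rewrite -(size_iota 0 N.+1) find_size.
have := before_find 0%N h; rewrite nth_iota // /hitp add0n.
by move/negbT; rewrite -ltNge.
Qed.

Lemma bn_refl b k : (k < N)%N -> bn (refl b) k = if (k < tau b)%N then ~~ bn b k else bn b k.
Proof.
move=> hk; have -> : k = val (Ordinal hk) by [].
by rewrite !bnE inE.
Qed.

Lemma W_refl_le {b i} : (i <= tau b)%N -> (i <= N)%N -> W (refl b) i = - W b i.
Proof.
move=> h1 h2; rewrite /W -sumrN; apply: eq_big_nat => k /andP[_ hk].
rewrite bn_refl; last by lia.
have -> : (k < tau b)%N by lia.
by case: (bn b k).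
Qed.

Lemma W_refl_N {b} : Tb b -> W (refl b) N = W b N - 2 * W b (tau b).
Proof.
move=> hT; have ht := tau_le hT.
rewrite /W !(big_cat_nat (leq0n (tau b)) ht) /=.
have E := W_refl_le (leqnn (tau b)) ht; rewrite /W in E; rewrite E.
have -> : \sum_(tau b <= k < N) sg (bn (refl b) k) = \sum_(tau b <= k < N) sg (bn b k).
  apply: eq_big_nat => k /andP[h1 h2]; rewrite bn_refl //.
  by have -> : (k < tau b)%N = false by lia.
ring.
Qed.

Lemma sig_refl {b} : Tb b -> find (sigp (refl b)) (iota 0 N.+1) = tau b.
Proof.
move=> hT; have ht := tau_le hT.
apply: (@find_eq _ _ _ 0%N).
- by rewrite size_iota; lia.
- rewrite nth_iota; last by lia.
  rewrite add0n /sigp W_refl_le //; have := tau_hit hT; lia.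
- move=> i hi; rewrite nth_iota; last by lia.
  rewrite add0n /sigp W_refl_le //; last by lia.
  by have := tau_before hi; lia.
  by lia.
Qed.

Lemma refl_inj : {in [pred b | Tb b] &, injective refl}.
Proof.
move=> b1 b2 h1 h2 e.
have et : tau b1 = tau b2 by rewrite -(sig_refl h1) -(sig_refl h2) e.
apply/setP => i.
have : (i \in refl b1) = (i \in refl b2) by rewrite e.
rewrite !inE et.
by case: (val i < tau b2)%N => // /negb_inj.
Qed.

Definition Qb b := [forall i : 'I_N, 0 < z + W b i.+1] && (z <= W b N).

Lemma count_refl :
  (#|[set b : {set 'I_N} | (z <= W b N)%R]| <= #|[set b | Qb b]| + #|[set b : {set 'I_N} | (3 * z <= W b N)%R]|)%N.
Proof.
set A := [set b : {set 'I_N} | (z <= W b N)%R].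
have h1 : A \subset [set b | Qb b] :|: [set b in A | Tb b].
  apply/subsetP => b; rewrite !inE => hb; rewrite hb /=.
  case hT : (Tb b); rewrite ?orbT // orbF /Qb hb andbT.
  apply/forallP => i; move/negbT: hT; rewrite /Tb -all_predC => /allP /(_ i.+1).
  have hin : i.+1 \in iota 0 N.+1 by rewrite mem_iota add0n ltnS ltn_ord.
  by move=> /(_ hin) /=; rewrite /hitp -ltNge.
apply: leq_trans (subset_leq_card h1) _; apply: leq_trans (leq_card_setU _ _) _.
rewrite leq_add2l.
rewrite -(card_in_imset (f := refl)); last first.
  by move=> b1 b2; rewrite !inE => /andP[_ ?] /andP[_ ?]; exact: refl_inj.
apply: subset_leq_card; apply/subsetP => c /imsetP[b]; rewrite !inE => /andP[hb hT] ->.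
rewrite W_refl_N //; have := tau_hit hT; lia.
Qed.

End Refl.

Lemma card_range N k0 r :
  #|[set b : {set 'I_N} | (k0 <= #|b| < k0 + r)%N]| = (\sum_(0 <= i < r) 'C(N, k0 + i))%N.
Proof.
elim: r => [|r IH].
  rewrite big_geq //; apply/eqP; rewrite cards_eq0; apply/eqP/setP => b; rewrite !inE; lia.
rewrite big_nat_recr //= -IH.
have -> : [set b : {set 'I_N} | (k0 <= #|b| < k0 + r.+1)%N] =
   [set b : {set 'I_N} | (k0 <= #|b| < k0 + r)%N] :|: [set b : {set 'I_N} | #|b| == (k0 + r)%N].
  apply/setP => b; rewrite !inE; apply/idP/idP.
  - move=> h; case: (ltnP #|b| (k0 + r)) => h2; first by apply/orP; left; lia.
    by apply/orP; right; apply/eqP; lia.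
  - by case/orP => [h|/eqP ->]; lia.
rewrite cardsU.
have -> : [set b : {set 'I_N} | (k0 <= #|b| < k0 + r)%N] :&: [set b : {set 'I_N} | #|b| == (k0 + r)%N] = set0.
  apply/setP => b; rewrite !inE; apply/negbTE; apply/negP => /andP[h /eqP e]; lia.
by rewrite cards0 subn0 card_draws card_ord.
Qed.

Lemma uphalfE n : uphalf n = (n.+1 %/ 2)%N.
Proof. by rewrite divn2. Qed.

Lemma binom_lb N k : (4 * uphalf N <= 2 * k)%N -> True. Proof. by []. Qed.

Lemma ch_le N k : (uphalf N <= k <= N)%N -> ((2 * k - N) ^ 2 <= N)%N ->
  ('C(N, uphalf N) <= 2 * 'C(N, k))%N.
Proof.
move=> /andP[h1 h2] hd.
have := @ratio N (k - uphalf N); rewrite subnKC // => /(_ h2).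
set C := 'C(N, uphalf N); set c := 'C(N, k); set d := (2 * k - N)%N => H.
have H2 : (C * (2 * N + 4) <= (2 * N + 4) * c + C * N)%N.
  apply: leq_trans H _; rewrite leq_add2l; exact: leq_mul.
have H3 : (C * (N + 4) <= (2 * N + 4) * c)%N by nia.
have : ((2 * N + 4) * C <= (2 * N + 4) * (2 * c))%N by nia.
by rewrite leq_pmul2l //; lia.
Qed.

Lemma main_nat N (z : nat) : (1 <= z)%N -> (4 * z ^ 2 <= N)%N ->
  (z * 'C(N, uphalf N) <= 4 * #|[set x : N.-tuple bool | Lev z%:Z x && Uev z%:Z x]|)%N.
Proof.
move=> z1 hN.
have N1 : (0 < N)%N by lia.
have hz2 : (2 * z <= N)%N by nia.
set LU := [set x : N.-tuple bool | _].
have hQ : (#|[set b : {set 'I_N} | Qb N z b]| <= #|LU|)%N.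
  rewrite -(card_imset _ (@psi_inj N)); apply: subset_leq_card.
  apply/subsetP => x /imsetP[b]; rewrite inE => /andP[/forallP hb hW] ->.
  rewrite inE; apply/andP; split.
  - by apply/forallP => i; rewrite Zw_psi //; exact: hb.
  - apply/existsP; exists (Ordinal (ltac:(lia) : (N.-1 < N)%N)) => /=.
    rewrite prednK // Zw_psi //. lia.
set A1 := [set b : {set 'I_N} | (z%:Z <= W b N)%R].
set A3 := [set b : {set 'I_N} | (3 * z%:Z <= W b N)%R].
set B := [set b : {set 'I_N} | (z%:Z <= W b N)%R && (W b N < 3 * z%:Z)%R].
have hB : (#|B| <= #|[set b : {set 'I_N} | Qb N z b]|)%N.
  have := @count_refl N z%:Z (ltac:(lia)).
  rewrite -/A1 -/A3 -(cardsID A3 A1).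
  have -> : A1 :&: A3 = A3.
    by apply/setP => b; rewrite !inE; apply/andP/idP => [[]//|h]; split => //; lia.
  have -> : A1 :\: A3 = B.
    by apply/setP => b; rewrite !inE -ltNge andbC.
  by rewrite [X in (X <= _)%N]addnC leq_add2r.
set k0 := ((N + z + 1) %/ 2)%N. set r := ((z + 1) %/ 2)%N.
have hR : (#|[set b : {set 'I_N} | (k0 <= #|b| < k0 + r)%N]| <= #|B|)%N.
  apply: subset_leq_card; apply/subsetP => b; rewrite !inE W_card => h.
  apply/andP; split; lia.
rewrite card_range in hR.
have hS : (r * 'C(N, uphalf N) <= 2 * \sum_(0 <= i < r) 'C(N, k0 + i))%N.
  have -> : (r * 'C(N, uphalf N) = \sum_(0 <= i < r) 'C(N, uphalf N))%N.
    by rewrite sum_nat_const_nat subn0.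
  rewrite big_distrr /= !big_mkord.
  apply: leq_sum => i _; apply: ch_le.
  - rewrite uphalfE /k0 /r; have := ltn_ord i; rewrite /r; lia.
  - have hd : (2 * (k0 + i) - N <= 2 * z)%N by have := ltn_ord i; rewrite /k0 /r; lia.
    apply: leq_trans hN; have -> : (4 * z ^ 2 = (2 * z) ^ 2)%N by ring.
    by rewrite leq_exp2r.
have hr : (z <= 2 * r)%N by rewrite /r; lia.
have := leq_trans hS (leq_mul (leqnn 2) (leq_trans hR (leq_trans hB hQ))).
move: hr; set C := 'C(N, uphalf N); set Q := #|LU|; nia.
Qed.

Theorem lemma20 :
  exists c : Rdefinitions.R, 0 < c /\
    forall (m n : nat) (z : int),
      (1 <= m)%N -> (m <= n)%N -> 0 <= z -> z <= lmn m n ->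
      probLU m n z >= c * (z%:~R / Num.sqrt ((n - m + 1)%:R)).
Proof.
exists (8%:R)^-1; split; first by rewrite invr_gt0 ltr0n.
move=> m n z hm hmn; case: z => // zn _ hz.
rewrite /probLU.
set N := (n - m + 1)%N.
have hP : (0 : Rdefinitions.R) < 2 ^+ N by rewrite exprn_gt0 // ltr0n.
case: zn hz => [|zn] hz.
  by rewrite (_ : (0%Z)%:~R = 0) // mul0r mulr0; apply: divr_ge0; [exact: ler0n | exact: ltW].
set z := zn.+1.
set LU := [set x : N.-tuple bool | _].
have N1 : (0 < N)%N by rewrite /N; lia.
move: hz; rewrite /lmn le_min => /andP[hz _].
rewrite floor_ge_int -/N in hz.
set s := Num.sqrt (N%:R : Rdefinitions.R).
have s0 : 0 < s by rewrite sqrtr_gt0 ltr0n.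
have ss : s ^+ 2 = N%:R by rewrite sqr_sqrtr // ler0n.
have hz4 : (4 * z ^ 2 <= N)%N.
  rewrite -(ler_nat Rdefinitions.R) natrM natrX -ss.
  have hz' : (z%:R : Rdefinitions.R) * 2 <= s.
    have hz2 : (z%:R : Rdefinitions.R) <= s / 2 by exact: hz.
    lra.
  have z0 : (0 : Rdefinitions.R) <= z%:R by exact: ler0n.
  nra.
have h1 := @main_nat N z (ltn0Sn zn) hz4.
have h2 := @central N N1.
rewrite -/LU in h1.
move: h1 h2; rewrite -!(ler_nat Rdefinitions.R) !natrM !natrX.
set Q := (#|LU|%:R : Rdefinitions.R); set C := ('C(N, uphalf N)%:R : Rdefinitions.R).
have -> : (4%:R : Rdefinitions.R) ^+ N = (2 ^+ N) ^+ 2 by rewrite -exprM mulnC exprM; congr (_ ^+ _); rewrite expr2 -natrM.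
rewrite -ss.
set P := (2 : Rdefinitions.R) ^+ N.
have -> : (Posz z)%:~R = (z%:R : Rdefinitions.R) by [].
set zr := (z%:R : Rdefinitions.R).
have zr0 : 0 <= zr by exact: ler0n.
have Q0 : 0 <= Q by exact: ler0n.
have C0 : 0 <= C by exact: ler0n.
move=> h1 h2.
have a1 : zr ^+ 2 * P ^+ 2 <= zr ^+ 2 * (4%:R * s ^+ 2 * (C * C)).
  by apply: ler_wpM2l; [exact: exprn_ge0 | exact: h2].
have a2 : (zr * C) ^+ 2 <= (4%:R * Q) ^+ 2.
  have zc : 0 <= zr * C by exact: mulr_ge0.
  by rewrite !expr2; apply: ler_pM.
have a3 : 4%:R * s ^+ 2 * (zr * C) ^+ 2 <= 4%:R * s ^+ 2 * (4%:R * Q) ^+ 2.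
  apply: ler_wpM2l => //; apply: mulr_ge0; [exact: ler0n | exact: exprn_ge0 (ltW s0)].
have sq : (zr * P) ^+ 2 <= (8%:R * s * Q) ^+ 2.
  have e1 : (zr * P) ^+ 2 = zr ^+ 2 * P ^+ 2 by ring.
  have e2 : zr ^+ 2 * (4%:R * s ^+ 2 * (C * C)) = 4%:R * s ^+ 2 * (zr * C) ^+ 2 by ring.
  have e3 : (8%:R * s * Q) ^+ 2 = 4%:R * s ^+ 2 * (4%:R * Q) ^+ 2.
    have -> : (8%:R : Rdefinitions.R) = 2 * 4%:R by rewrite -natrM.
    ring.
  rewrite e1 e3; apply: le_trans a1 _; rewrite e2; exact: a3.
have P0 : 0 <= P by exact: ltW.
have key : zr * P <= 8%:R * s * Q.
  have hs0 := ltW s0.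
  rewrite -(@ler_pXn2r _ 2) // nnegrE; [exact: mulr_ge0 | apply: mulr_ge0 => //; exact: mulr_ge0].
rewrite ler_pdivlMr //.
have sn : s != 0 by rewrite gt_eqF.
have -> : 8%:R^-1 * (zr / s) * P = (zr * P) / (8%:R * s).
  by field.
rewrite ler_pdivrMr; last by rewrite mulr_gt0 // ltr0n.
by move: key; rewrite [Q * _]mulrC.
Qed.
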